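(* Assume $\alpha=\beta\ge2$ and let $(U,V,\Lambda)$ be the similarity profile. Then for every $\tau\ge0$ and all measurable $\rho,\zeta:\mathbb R\to(0,\infty)$ for which $\mathcal I_\Lambda(\rho,\zeta)$ is finite, $$\mathcal I_\Lambda(\rho,\zeta)-e^\tau\mathcal D_{\mathrm{react}}(\rho,\zeta)\le K_2\,e^{-\tau/(\alpha-1)},\qquad K_2:=\frac{\tilde c_\alpha}{k^{1/(\alpha-1)}}\int_{\mathbb R}\Big|\frac{\alpha\Lambda(y)}{U(y)}\Big|^{\alpha/(\alpha-1)}\mathrm dy,$$ with $\tilde c_\alpha=\big(\tfrac{2}{\alpha^2}\big)^{1/(\alpha-1)}\tfrac{\alpha-1}{\alpha}$.
   Context: Fix $d_1,d_2,k>0$, real stoichiometric coefficients $\alpha,\beta\ge1$ and $A_-,A_+>0$. The similarity profile is a triple $(U,V,\Lambda)$ with $U,V\in\mathrm C^2(\mathbb R)$ positive, bounded and bounded away from $0$, $\Lambda:\mathbb R\to\mathbb R$, satisfying $d_1U''+\tfrac y2U'+\alpha\Lambda=0$, $d_2V''+\tfrac y2V'-\beta\Lambda=0$, $U^\alpha=V^\beta$ on $\mathbb R$, and $U(\pm\infty)=A_\pm^\beta$, $V(\pm\infty)=A_\pm^\alpha$. $\Gamma(a,b)=(a-b)(\log a-\log b)$ for $a,b>0$, $\Gamma(0,0)=0$, $\Gamma(0,c)=\Gamma(c,0)=\infty$ for $c>0$. Reactive dissipation $\mathcal D_{\mathrm{react}}(\rho,\zeta)=\int_{\mathbb R}kU^\alpha\,\Gamma(\rho^\alpha,\zeta^\beta)\,\mathrm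 dy$. Mixed term $\mathcal I_\Lambda(\rho,\zeta)=\int_{\mathbb R}\big((1-\rho)\alpha-(1-\zeta)\beta\big)\Lambda\,\mathrm dy$. *)

(* Defs.v *)
From HB Require Import structures.
From mathcomp Require Import all_boot all_order all_algebra.
From mathcomp Require Import all_classical all_reals all_analysis.

Set Implicit Arguments.
Unset Strict Implicit.
Unset Printing Implicit Defensive.

Import Order.TTheory GRing.Theory Num.Theory.
Import numFieldNormedType.Exports.

Local Open Scope classical_set_scope.
Local Open Scope ring_scope.

Section Defs.
Variable R : realType.

Definition C2 (f : R -> R) : Prop :=
  (forall x, derivable f x 1) /\
  (forall x, derivable (derive1 f) x 1) /\
  continuous (derive1 (derive1 f)).

Definition pos_bdd_bdd_away (f : R -> R) : Prop :=
  (forall y, 0 < f y) /\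
  (exists M : R, forall y, f y <= M) /\
  (exists m : R, 0 < m /\ forall y, m <= f y).

Definition similarity_profile (d1 d2 alpha beta Am Ap : R)
    (U V Lam : R -> R) : Prop :=
  C2 U /\ C2 V /\ pos_bdd_bdd_away U /\ pos_bdd_bdd_away V /\
  (forall y, d1 * derive1 (derive1 U) y + y / 2 * derive1 U y + alpha * Lam y = 0) /\
  (forall y, d2 * derive1 (derive1 V) y + y / 2 * derive1 V y - beta * Lam y = 0) /\
  (forall y, U y `^ alpha = V y `^ beta) /\
  (U x @[x --> -oo] --> Am `^ beta) /\
  (U x @[x --> +oo] --> Ap `^ beta) /\
  (V x @[x --> -oo] --> Am `^ alpha) /\
  (V x @[x --> +oo] --> Ap `^ alpha).

(* Gamma(a,b) = (a-b)(log a - log b) for a,b>0, Gamma(0,0)=0,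
   Gamma(0,c)=Gamma(c,0)=+oo for c>0 (arguments are meant to be >= 0) *)
Definition Gamma (a b : R) : \bar R :=
  if (a == 0) && (b == 0) then 0%E
  else if (a == 0) || (b == 0) then +oo%E
  else ((a - b) * (ln a - ln b))%:E.

Definition D_react (k alpha beta : R) (U rho zeta : R -> R) : \bar R :=
  (\int[@lebesgue_measure R]_(y in setT)
     ((k * U y `^ alpha)%:E * Gamma (rho y `^ alpha) (zeta y `^ beta)))%E.

Definition I_integrand (alpha beta : R) (Lam rho zeta : R -> R) (y : R) : R :=
  ((1 - rho y) * alpha - (1 - zeta y) * beta) * Lam y.

Definition I_Lambda (alpha beta : R) (Lam rho zeta : R -> R) : \bar R :=
  (\int[@lebesgue_measure R]_(y in setT) (I_integrand alpha beta Lam rho zeta y)%:E)%E.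

Definition c_tilde (alpha : R) : R :=
  (2 / alpha ^+ 2) `^ (1 / (alpha - 1)) * ((alpha - 1) / alpha).

Definition K2 (k alpha : R) (U Lam : R -> R) : \bar R :=
  ((c_tilde alpha / k `^ (1 / (alpha - 1)))%:E *
   \int[@lebesgue_measure R]_(y in setT)
      (`| alpha * Lam y / U y | `^ (alpha / (alpha - 1)))%:E)%E.

End Defs.

(* Main.v *)
Require Import Defs.
From HB Require Import structures.
From mathcomp Require Import all_boot all_order all_algebra.
From mathcomp Require Import all_classical all_reals all_analysis.
From mathcomp Require Import measurable_realfun.
From mathcomp Require Import ring lra.
Import Order.TTheory GRing.Theory Num.Theory.
Import numFieldNormedType.Exports.
Local Open Scope classical_set_scope.
Local Open Scope ring_scope.

Lemma core_lb (R : realType) (a x y : R) : 2 <= a -> 0 < y -> y <= x ->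
  (x - y) `^ a <= (x `^ a - y `^ a) * (ln x - ln y).
Proof.
move=> a2 y0 yx.
have x0 : 0 < x by apply: lt_le_trans yx.
have d0 : 0 <= x - y by rewrite subr_ge0.
have a1 : 0 < a - 1 by rewrite subr_gt0 (lt_le_trans _ a2) // ltr1n.
have a20 : 0 <= a - 1 - 1 by rewrite -addrA -opprD subr_ge0.
have hln : (x - y) / x <= ln x - ln y.
  have h1 : ln (1 + (y / x - 1)) <= y / x - 1.
    apply: le_ln1Dx; rewrite ltrBrDl subrr divr_gt0 //.
  rewrite addrC subrK ln_div ?posrE // in h1.
  have -> : (x - y) / x = 1 - y / x by rewrite mulrBl divff ?gt_eqF.
  lra.
have hp : y `^ a <= y * x `^ (a - 1).
  rewrite -(mulr_powRB1 (ltW y0) (lt_le_trans _ a2)) ?ltr0n //.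
  rewrite ler_pM2l //; apply: ge0_ler_powR => //; first exact: ltW.
  by rewrite nnegrE ltW. by rewrite nnegrE ltW.
have hq : (x - y) * x `^ (a - 1) <= x `^ a - y `^ a.
  rewrite -(mulr_powRB1 (ltW x0) (lt_le_trans _ a2)) ?ltr0n //.
  rewrite mulrBl; lra.
have xa1 : x `^ (a - 1) = x * x `^ (a - 1 - 1) by rewrite mulr_powRB1 // ltW.
have da : (x - y) `^ a = (x - y) * ((x - y) * (x - y) `^ (a - 1 - 1)).
  by rewrite mulr_powRB1 // mulr_powRB1 // (lt_le_trans _ a2) ?ltr0n.
have hx : (x - y) `^ (a - 1 - 1) <= x `^ (a - 1 - 1).
  apply: ge0_ler_powR => //; rewrite ?nnegrE //; [exact: ltW| lra].
apply: (@le_trans _ _ (((x - y) * x `^ (a - 1)) * ((x - y) / x))).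
  rewrite da xa1.
  have -> : (x - y) * (x * x `^ (a - 1 - 1)) * ((x - y) / x) = (x - y) * ((x - y) * x `^ (a - 1 - 1)) by field; rewrite gt_eqF.
  idtac.
  by apply: ler_wpM2l => //; apply: ler_wpM2l.
apply: ler_pM => //; first by rewrite mulr_ge0 // powR_ge0.
by rewrite divr_ge0 // ltW.
Qed.

Lemma powRV (R : realType) (x r : R) : 0 < x -> x^-1 `^ r = (x `^ r)^-1.
Proof.
move=> x0; have xi : 0 < x^-1 by rewrite invr_gt0.
have := powRM r (ltW xi) (ltW x0).
rewrite mulVf ?gt_eqF // powR1 => h.
apply: (@mulIf _ (x `^ r)); first by rewrite gt_eqF // powR_gt0.
by rewrite -h mulVf // gt_eqF // powR_gt0.
Qed.

Lemma young_pt (R : realType) (a A t B : R) : 2 <= a -> 0 <= A -> 0 <= t -> 0 < B ->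
  A * t <= B * t `^ a +
    (a - 1) / a * A `^ (a / (a - 1)) * (a * B) `^ (- (1 / (a - 1))).
Proof.
move=> a2 A0 t0 B0.
have a0 : 0 < a by apply: lt_le_trans a2; rewrite ltr0n.
have a1 : 0 < a - 1 by rewrite subr_gt0 (lt_le_trans _ a2) // ltr1n.
set P := a * B.
have P0 : 0 < P by rewrite mulr_gt0.
have Pa0 : 0 < P `^ (1 / a) by rewrite powR_gt0.
have q0 : 0 < a / (a - 1) by rewrite divr_gt0.
have Pi : 0 < (P `^ (1 / a))^-1 by rewrite invr_gt0.
have := @conjugate_powR R (P `^ (1 / a) * t) (A * (P `^ (1 / a))^-1) a (a / (a - 1)).
have pq : a^-1 + (a / (a - 1))^-1 = 1 by field; rewrite !gt_eqF.
move=> /(_ (mulr_ge0 (ltW Pa0) t0) (mulr_ge0 A0 (ltW Pi)) a0 q0 pq).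
have -> : P `^ (1 / a) * t * (A * (P `^ (1 / a))^-1) = A * t.
  by field; rewrite gt_eqF.
move=> /le_trans; apply.
rewrite powRM ?(ltW Pa0) // -powRrM mul1r mulVf ?gt_eqF // powRr1 ?(ltW P0) //.
rewrite powRM ?invr_ge0 ?powR_ge0 //.
rewrite -powRN -powRrM.
have -> : - a^-1 * (a / (a - 1)) = - (1 / (a - 1)) by field; rewrite !gt_eqF.
rewrite /P; apply: lerD.
  by rewrite le_eqVlt; apply/orP; left; apply/eqP; field; rewrite gt_eqF.
rewrite le_eqVlt; apply/orP; left; apply/eqP.
field; rewrite !gt_eqF //.
Qed.

Lemma const_cmp (R : realType) (a A u k tau : R) : 2 <= a -> 0 <= A -> 0 < u -> 0 < k ->
  (a - 1) / a * A `^ (a / (a - 1)) *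
    (a * (expR tau * (k * u `^ a) * a)) `^ (- (1 / (a - 1)))
  <= (2 / a ^+ 2) `^ (1 / (a - 1)) * ((a - 1) / a) / k `^ (1 / (a - 1)) *
     (A / u) `^ (a / (a - 1)) * expR (- tau / (a - 1)).
Proof.
move=> a2 A0 u0 k0.
have a0 : 0 < a by apply: lt_le_trans a2; rewrite ltr0n.
have a1 : 0 < a - 1 by rewrite subr_gt0 (lt_le_trans _ a2) // ltr1n.
set r := 1 / (a - 1).
have qE : a / (a - 1) = a * r by rewrite /r mulrA mulr1.
rewrite qE.
have -> : a * (expR tau * (k * u `^ a) * a) = (a ^+ 2) * expR tau * k * u `^ a.
  by rewrite expr2; ring.
have a2p : 0 < a ^+ 2 by rewrite exprn_gt0.
have E1 : (a ^+ 2 * expR tau * k * u `^ a) `^ r =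
    (a ^+ 2) `^ r * expR (tau * r) * k `^ r * u `^ (a * r).
  rewrite (@powRM _ (a ^+ 2 * expR tau * k) (u `^ a) r); last 2 first.
  - by rewrite !mulr_ge0 // ?expR_ge0 // ltW.
  - exact: powR_ge0.
  rewrite (@powRM _ (a ^+ 2 * expR tau) k r); last 2 first.
  - by rewrite !mulr_ge0 // ?expR_ge0 // ltW.
  - exact: ltW.
  rewrite (@powRM _ (a ^+ 2) (expR tau) r); last 2 first.
  - exact: ltW.
  - exact: expR_ge0.
  by rewrite -expRM -powRrM.
have E2 : (2 / a ^+ 2) `^ r = 2 `^ r * ((a ^+ 2) `^ r)^-1.
  rewrite (@powRM _ 2 (a ^+ 2)^-1 r) ?powRV // ?invr_ge0 ltW //.
have E3 : (A / u) `^ (a * r) = A `^ (a * r) * (u `^ (a * r))^-1.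
  rewrite (@powRM _ A u^-1 (a * r)) ?powRV // ?invr_ge0 ltW //.
rewrite powRN E1 E2 E3.
have -> : - tau / (a - 1) = - (tau * r) by rewrite /r mulNr mulrA mulr1.
rewrite expRN.
have X1 : 0 < (a ^+ 2) `^ r by rewrite powR_gt0.
have X2 : 0 < expR (tau * r) by rewrite expR_gt0.
have X3 : 0 < k `^ r by rewrite powR_gt0.
have X4 : 0 < u `^ (a * r) by rewrite powR_gt0.
have T1 : 1 <= 2 `^ r.
  have := @ler_powR R 2 (ler1n _ 2) 0 r; rewrite powRr0; apply.
  by rewrite /r divr_ge0 // ltW.
set L := (_ * _ * _)%R.
have L0 : 0 <= L.
  rewrite /L; apply: mulr_ge0; first apply: mulr_ge0.
  - by apply: divr_ge0; apply: ltW.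
  - exact: powR_ge0.
  rewrite invr_ge0; apply: ltW; apply: mulr_gt0 => //; apply: mulr_gt0 => //.
  exact: mulr_gt0.
have -> : 2 `^ r * ((a ^+ 2) `^ r)^-1 * ((a - 1) / a) / k `^ r *
    (A `^ (a * r) * (u `^ (a * r))^-1) * (expR (tau * r))^-1 = 2 `^ r * L.
  by rewrite /L; field; rewrite !gt_eqF.
by rewrite ler_peMl.
Qed.

Lemma gam_lb (R : realType) (a x y : R) : 2 <= a -> 0 < x -> 0 < y ->
  a * `|x - y| `^ a <= (x `^ a - y `^ a) * (ln (x `^ a) - ln (y `^ a)).
Proof.
move=> a2 x0 y0.
have a0 : 0 < a by apply: lt_le_trans a2; rewrite ltr0n.
rewrite !ln_powR -mulrBr mulrCA ler_pM2l //.
have [yx|xy] := leP y x.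
  by rewrite ger0_norm ?subr_ge0 // core_lb.
rewrite ltr0_norm ?subr_lt0 // opprB.
have -> : (x `^ a - y `^ a) * (ln x - ln y) = (y `^ a - x `^ a) * (ln y - ln x) by ring.
by rewrite core_lb // ltW.
Qed.

Lemma pointwise (R : realType) (a k tau L u x y : R) : 2 <= a -> 0 < k -> 0 < u ->
  0 < x -> 0 < y ->
  ((1 - x) * a - (1 - y) * a) * L -
    expR tau * (k * u `^ a * ((x `^ a - y `^ a) * (ln (x `^ a) - ln (y `^ a))))
  <= (2 / a ^+ 2) `^ (1 / (a - 1)) * ((a - 1) / a) / k `^ (1 / (a - 1)) *
     `| a * L / u | `^ (a / (a - 1)) * expR (- tau / (a - 1)).
Proof.
move=> a2 k0 u0 x0 y0.
have a0 : 0 < a by apply: lt_le_trans a2; rewrite ltr0n.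
set A := `|a * L|.
set t := `|x - y|.
set B := expR tau * (k * u `^ a) * a.
have B0 : 0 < B by rewrite /B !mulr_gt0 ?expR_gt0 ?powR_gt0.
have h1 : ((1 - x) * a - (1 - y) * a) * L <= A * t.
  have -> : ((1 - x) * a - (1 - y) * a) * L = (a * L) * (y - x) by ring.
  rewrite /A /t distrC -normrM; exact: ler_norm.
have h2 : B * t `^ a <= expR tau * (k * u `^ a * ((x `^ a - y `^ a) * (ln (x `^ a) - ln (y `^ a)))).
  rewrite /B -mulrA -mulrA; apply: ler_wpM2l; first exact: expR_ge0.
  apply: ler_wpM2l; first by rewrite mulr_ge0 ?powR_ge0 // ltW.
  exact: gam_lb.
have h3 := @young_pt R a A t B a2 (normr_ge0 _) (normr_ge0 _) B0.
have h4 := @const_cmp R a A u k tau a2 (normr_ge0 _) u0 k0.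
have -> : `| a * L / u | = A / u.
  by rewrite normrM (@gtr0_norm _ u^-1) ?invr_gt0.
lra.
Qed.

Theorem mainTheorem9 (R : realType) (d1 d2 k alpha beta Am Ap : R)
    (U V Lam : R -> R) :
  0 < d1 -> 0 < d2 -> 0 < k -> 0 < Am -> 0 < Ap ->
  alpha = beta -> 2 <= alpha ->
  similarity_profile d1 d2 alpha beta Am Ap U V Lam ->
  forall (tau : R), 0 <= tau ->
  forall (rho zeta : R -> R),
    measurable_fun setT rho -> measurable_fun setT zeta ->
    (forall y, 0 < rho y) -> (forall y, 0 < zeta y) ->
    (@lebesgue_measure R).-integrable setT
       (fun y => (I_integrand alpha beta Lam rho zeta y)%:E) ->
    (I_Lambda alpha beta Lam rho zeta
       - (expR tau)%:E * D_react k alpha beta U rho zeta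
     <= K2 k alpha U Lam * (expR (- tau / (alpha - 1)))%:E)%E.
Proof.
move=> d10 d20 k0 Am0 Ap0 ab a2 SP tau tau0 rho zeta mrho mzeta rho0 zeta0 Iint.
subst beta.
have a0 : 0 < alpha by apply: lt_le_trans a2; rewrite ltr0n.
case: SP => [[dU [ddU cU]] [_ [[Upos _] [_ [odeU _]]]]].
have cU0 : continuous U.
  by move=> x; apply: differentiable_continuous; apply/derivable1_diffP; exact: dU.
have cU1 : continuous (derive1 U).
  by move=> x; apply: differentiable_continuous; apply/derivable1_diffP; exact: ddU.
have mU : measurable_fun setT U by exact: continuous_measurable_fun.
have mU1 : measurable_fun setT (derive1 U) by exact: continuous_measurable_fun.
have mU2 : measurable_fun setT (derive1 (derive1 U)) by exact: continuous_measurable_fun.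
have mUi : measurable_fun setT (fun y => (U y)^-1).
  apply: continuous_measurable_fun => x.
  by apply: continuousV; [rewrite gt_eqF | exact: cU0].
have LamE : Lam = fun y => - (d1 * derive1 (derive1 U) y + y / 2 * derive1 U y) * alpha^-1.
  apply/funext => y; have := odeU y => h.
  apply: (@mulfI _ alpha); first by rewrite gt_eqF.
  rewrite mulrCA mulfV ?gt_eqF // mulr1.
  lra.
have mLam : measurable_fun setT Lam.
  rewrite LamE; apply: measurable_funM => //.
  apply: measurable_funN; apply: measurable_funD.
    by apply: measurable_funM.
  apply: measurable_funM => //.
  exact: mulrr_measurable.
pose G y := (rho y `^ alpha - zeta y `^ alpha) *
  (ln (rho y `^ alpha) - ln (zeta y `^ alpha)).
pose C0 := c_tilde alpha / k `^ (1 / (alpha - 1)) * expR (- tau / (alpha - 1)).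
pose phi y := `|alpha * Lam y / U y| `^ (alpha / (alpha - 1)).
pose g1 y := k * U y `^ alpha * G y.
have G0 y : 0 <= G y.
  apply: (le_trans _ (@gam_lb R alpha (rho y) (zeta y) a2 (rho0 y) (zeta0 y))).
  by rewrite mulr_ge0 ?powR_ge0 // ltW.
have g10 y : 0 <= g1 y.
  by apply: mulr_ge0; [apply: mulr_ge0; [exact: ltW|exact: powR_ge0]|exact: G0].
have phi0 y : 0 <= phi y by exact: powR_ge0.
have C00 : 0 <= C0.
  rewrite /C0 /c_tilde; apply: mulr_ge0; last exact: expR_ge0.
  apply: divr_ge0; last exact: powR_ge0.
  apply: mulr_ge0; first exact: powR_ge0.
  by apply: divr_ge0; apply: ltW => //; rewrite subr_gt0 (lt_le_trans _ a2) // ltr1n.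
have Dg : D_react k alpha alpha U rho zeta =
    (\int[@lebesgue_measure R]_(y in setT) (g1 y)%:E)%E.
  rewrite /D_react; apply: eq_integral => y _; rewrite /Gamma.
  have r0 := @powR_gt0 R (rho y) alpha (rho0 y).
  have z0 := @powR_gt0 R (zeta y) alpha (zeta0 y).
  by rewrite (gt_eqF r0) (gt_eqF z0) /= -EFinM.
have Kh : (K2 k alpha U Lam * (expR (- tau / (alpha - 1)))%:E =
    C0%:E * \int[@lebesgue_measure R]_(y in setT) (phi y)%:E)%E.
  by rewrite /K2 muleAC -EFinM.
have mpr : measurable_fun setT (fun y => rho y `^ alpha).
  by apply: (measurableT_comp (measurable_powR alpha) mrho).
have mpz : measurable_fun setT (fun y => zeta y `^ alpha).
  by apply: (measurableT_comp (measurable_powR alpha) mzeta).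
have mg1 : measurable_fun setT g1.
  rewrite /g1 /G; apply: measurable_funM.
    apply: measurable_funM => //.
    exact: measurableT_comp (measurable_powR alpha) mU.
  apply: measurable_funM; first exact: measurable_funB.
  by apply: measurable_funB; apply: measurableT_comp (@measurable_ln R) _.
have mphi : measurable_fun setT phi.
  apply: measurableT_comp (measurable_powR _) _.
  apply: measurableT_comp (@normr_measurable _ _) _.
  apply: measurable_funM => //; exact: measurable_funM.
have mf := measurable_int _ Iint.
have pt y : (I_integrand alpha alpha Lam rho zeta y <=
    expR tau * g1 y + C0 * phi y)%R.
  have := @pointwise R alpha k tau (Lam y) (U y) (rho y) (zeta y) a2 k0 (Upos y) (rho0 y) (zeta0 y).
  rewrite /I_integrand /g1 /G /C0 /phi /c_tilde; lra.
have I_le : (\int[@lebesgue_measure R]_(y in setT)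
      (I_integrand alpha alpha Lam rho zeta y)%:E <=
    (expR tau)%:E * \int[@lebesgue_measure R]_(y in setT) (g1 y)%:E +
    C0%:E * \int[@lebesgue_measure R]_(y in setT) (phi y)%:E)%E.
  pose F := fun y => (I_integrand alpha alpha Lam rho zeta y)%:E.
  rewrite -/F integralE.
  apply: (@le_trans _ _ (\int[@lebesgue_measure R]_(y in setT) F^\+ y)%E).
    rewrite -[X in (_ <= X)%E]sube0; apply: leeB => //.
    by apply: integral_ge0 => y _; exact: funeneg_ge0.
  rewrite -ge0_integralZl_EFin //; try (by move=> y _; rewrite lee_fin);
    try (by apply/measurable_EFinP); try exact: expR_ge0.
  rewrite -ge0_integralZl_EFin //; try (by move=> y _; rewrite lee_fin);
    try (by apply/measurable_EFinP); try exact: expR_ge0.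
  rewrite -ge0_integralD //; last 4 first.
  - by move=> y _; rewrite lee_fin mulr_ge0 // expR_ge0.
  - by apply/measurable_EFinP; apply: measurable_funM.
  - by move=> y _; rewrite lee_fin mulr_ge0.
  - by apply/measurable_EFinP; apply: measurable_funM.
  apply: ge0_le_integral.
  - exact: measurableT.
  - by move=> y _; exact: funepos_ge0.
  - exact: measurable_funepos.
  - apply: emeasurable_funD; apply/measurable_EFinP; exact: measurable_funM.
  move=> y _; rewrite funeposE ge_max; apply/andP; split.
    by rewrite -!EFinM -EFinD lee_fin.
  by rewrite adde_ge0 // -EFinM lee_fin mulr_ge0 // expR_ge0.
rewrite Dg Kh /I_Lambda.
have Dge0 : (0 <= \int[@lebesgue_measure R]_(y in setT) (g1 y)%:E)%E.
  by apply: integral_ge0 => y _; rewrite lee_fin.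
have Ifin := integrable_fin_num measurableT Iint.
case: (boolP ((\int[@lebesgue_measure R]_(y in setT) (g1 y)%:E)%E \is a fin_num)) => Dfin.
  by rewrite leeBlDl // fin_numM.
move: Dfin; rewrite ge0_fin_numE // -leNgt leye_eq => /eqP ->.
rewrite muleC gt0_mulye ?lte_fin ?expR_gt0 //.
move: Ifin; case: (\int[@lebesgue_measure R]_(y in setT) _)%E => // x _.
by rewrite /= leNye.
Qed.
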